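(* There is a constant $c$ such that for every $n\in\mathbb{N}_{\geq 1}$ there exists a language $L_n\subseteq\{a,b\}^*$ with $L_n\in\mathsf{DD}_0$ such that $L_n$ is recognized by an NFA with at most $c\,n^2$ states, but every poNFA recognizing $L_n$ has more than $2^{n-1}$ states.
   Context: $\mathsf{DD}_0$ (level $0$ of the dot-depth hierarchy) is the class of finite and cofinite languages. NFAs have a single initial state and no $\varepsilon$-transitions. For an NFA with transition function $\delta$, write $p\leq q$ if $q\in\delta(p,w)$ for some word $w$; the NFA is a poNFA (partially ordered NFA) if $\leq$ is a partial order on its states. The size of an automaton is its number of states. *)

(* Defs.v *)
(* Alphabet {a,b} is modelled by bool (a = false, b = true). *)
From mathcomp Require Import all_boot.
Set Implicit Arguments. Unset Strict Implicit. Unset Printing Implicit Defensive.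

Record nfa (A : finType) := NFA {
  state : finType;
  init : state;
  delta : state -> A -> {set state};
  final : {set state}
}.

Fixpoint delta_set (A : finType) (M : nfa A) (X : {set state M}) (w : seq A)
  : {set state M} :=
  match w with
  | [::] => X
  | a :: w' => @delta_set A M (\bigcup_(p in X) delta p a) w'
  end.
Arguments delta_set {A} M X w.

Definition delta_star (A : finType) (M : nfa A) (p : state M) (w : seq A) :=
  delta_set M [set p] w.

Definition accepts (A : finType) (M : nfa A) (w : seq A) : bool :=
  [exists q in delta_star (init M) w, q \in final M].

Definition recognizes (A : finType) (M : nfa A) (L : seq A -> Prop) : Prop :=
  forall w, L w <-> accepts M w.

Definition nfa_size (A : finType) (M : nfa A) : nat := #|state M|.

Definition reach_le (A : finType) (M : nfa A) (p q : state M) : Prop :=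
  exists w : seq A, q \in delta_star p w.

(* poNFA: reach_le is a partial order (reflexivity and transitivity always
   hold, so we require all three explicitly anyway). *)
Definition is_poNFA (A : finType) (M : nfa A) : Prop :=
  (forall p : state M, reach_le p p) /\
  (forall p q r : state M, reach_le p q -> reach_le q r -> reach_le p r) /\
  (forall p q : state M, reach_le p q -> reach_le q p -> p = q).

Definition lang_finite (A : finType) (L : seq A -> Prop) : Prop :=
  exists s : seq (seq A), forall w, L w <-> w \in s.

Definition in_DD0 (A : finType) (L : seq A -> Prop) : Prop :=
  lang_finite L \/ lang_finite (fun w => ~ L w).

(* Main.v *)
Require Import Defs.
From mathcomp Require Import all_boot zify.
From Stdlib Require Import ClassicalEpsilon.
Set Implicit Arguments. Unset Strict Implicit. Unset Printing Implicit Defensive.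

Lemma delta_set_cat (A : finType) (M : nfa A) (X : {set state M}) u v :
  delta_set M X (u ++ v) = delta_set M (delta_set M X u) v.
Proof. by elim: u X => //= a u IH X; rewrite IH. Qed.

Lemma delta_set_mono (A : finType) (M : nfa A) (X Y : {set state M}) w :
  X \subset Y -> delta_set M X w \subset delta_set M Y w.
Proof.
elim: w X Y => //= a w IH X Y sXY; apply: IH.
apply/subsetP => q /bigcupP [p pX qp]; apply/bigcupP; exists p => //.
exact: (subsetP sXY).
Qed.

Lemma delta_star_cons (A : finType) (M : nfa A) (p : state M) a w :
  delta_star p (a :: w) = delta_set M (delta p a) w.
Proof. by rewrite /delta_star /= big_set1. Qed.

Lemma delta_star_nil (A : finType) (M : nfa A) (p : state M) :
  delta_star p [::] = [set p].
Proof. by []. Qed.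

Lemma delta_setP (A : finType) (M : nfa A) (X : {set state M}) w q :
  q \in delta_set M X w -> exists2 p, p \in X & q \in delta_star p w.
Proof.
elim: w X => [|a w IH] X /=.
  by move=> qX; exists q => //; rewrite /delta_star /= set11.
move=> /IH [p' /bigcupP [p pX p'p] qp']; exists p => //.
rewrite delta_star_cons; apply: (subsetP (delta_set_mono _ _)) qp'.
by rewrite sub1set.
Qed.

Lemma delta_star_trans (A : finType) (M : nfa A) (q q' q'' : state M) u v :
  q' \in delta_star q u -> q'' \in delta_star q' v -> q'' \in delta_star q (u ++ v).
Proof.
move=> h1 h2; rewrite /delta_star delta_set_cat.
apply: (subsetP (delta_set_mono _ _)) h2; by rewrite sub1set.
Qed.

Lemma delta_star_step (A : finType) (M : nfa A) (q q' : state M) a :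
  q' \in delta q a -> q' \in delta_star q [:: a].
Proof. by rewrite delta_star_cons. Qed.

Lemma delta_star_rcons_inv (A : finType) (M : nfa A) (p q : state M) w a :
  q \in delta_star p (rcons w a) -> exists2 r, r \in delta_star p w & q \in delta r a.
Proof.
rewrite -cats1 /delta_star delta_set_cat /= => /bigcupP [r hr hq]; by exists r.
Qed.

Lemma delta_star_rcons (A : finType) (M : nfa A) (p q r : state M) w a :
  r \in delta_star p w -> q \in delta r a -> q \in delta_star p (rcons w a).
Proof. by move=> h1 h2; rewrite -cats1; apply: delta_star_trans h1 _; apply: delta_star_step. Qed.

Definition rb (A : finType) (M : nfa A) (p q : state M) : bool :=
  if excluded_middle_informative (reach_le p q) then true else false.

Lemma rbP (A : finType) (M : nfa A) (p q : state M) : reflect (reach_le p q) (rb p q).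
Proof. rewrite /rb; case: excluded_middle_informative => h; by constructor. Qed.

Definition hgt (A : finType) (M : nfa A) (p : state M) := #|[set q | rb p q]|.

Lemma hgt_lt (A : finType) (M : nfa A) (p p' : state M) c :
  is_poNFA M -> p' \in delta p c -> p' != p -> hgt p' < hgt p.
Proof.
move=> [Hr [Ht Ha]] hp' ne; apply: proper_card; apply/properP; split.
  apply/subsetP => q; rewrite !inE => /rbP h; apply/rbP; apply: Ht h.
  by exists [:: c]; apply: delta_star_step.
exists p; rewrite !inE; first by apply/rbP.
apply/rbP => h; move/eqP: ne; apply; apply: Ha => //.
by exists [:: c]; apply: delta_star_step.
Qed.

Lemma hgt_pos (A : finType) (M : nfa A) (p : state M) : is_poNFA M -> 0 < hgt p.
Proof. move=> [Hr _]; apply/card_gt0P; exists p; rewrite inE; exact/rbP. Qed.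

Lemma po_pump (A : finType) (M : nfa A) : is_poNFA M -> forall w (p q : state M),
  q \in delta_star p w ->
  (exists u c v (s : state M), [/\ w = u ++ c :: v, s \in delta_star p u,
       s \in delta s c & q \in delta_star s v]) \/ hgt q + size w <= hgt p.
Proof.
move=> po; elim=> [|c w IH] p q /=.
  by rewrite delta_star_nil inE => /eqP ->; right; rewrite addn0.
rewrite delta_star_cons => /delta_setP [p' hp' hq].
case: (eqVneq p' p) => [ep|ne].
  move: hp' hq; rewrite ep => hp' hq.
  by left; exists [::], c, w, p; rewrite delta_star_nil inE eqxx; split.
case: (IH _ _ hq) => [[u [c' [v [s [ew hs hl hv]]]]]|hle].
  left; exists (c :: u), c', v, s; split => //; first by rewrite ew.
  by rewrite delta_star_cons; apply: (subsetP (delta_set_mono _ _)) hs; rewrite sub1set.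
right; have := hgt_lt po hp' ne; rewrite addnS; exact: leq_ltn_trans.
Qed.

Definition dup (w : seq bool) i := take i w ++ nth false w i :: drop i w.

Lemma po_accept (M : nfa bool) x : is_poNFA M -> accepts M x -> #|state M| <= size x ->
  exists2 i, i < size x & accepts M (dup x i).
Proof.
move=> po /existsP [qf /andP [hq hf]] hk.
case: (po_pump po hq) => [[u [c [v [s [ew hs hl hv]]]]]|hle].
  exists (size u); first by rewrite ew size_cat /= addnS ltnS leq_addr.
  apply/existsP; exists qf; rewrite hf andbT.
  have -> : dup x (size u) = u ++ c :: c :: v.
    by rewrite /dup ew take_size_cat // drop_size_cat // nth_cat ltnn subnn.
  apply: delta_star_trans hs _.
  rewrite -cat1s; apply: delta_star_trans (delta_star_step hl) _.
  rewrite -cat1s; exact: delta_star_trans (delta_star_step hl) hv.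
exfalso; have h1 := hgt_pos qf po.
have h2 : hgt (init M) <= #|state M| by apply: max_card.
have h3 := leq_trans hle h2.
have : size x < #|state M| by apply: leq_trans h3; rewrite -add1n leq_add2r.
by rewrite ltnNge hk.
Qed.

Fixpoint inc (u : seq bool) : seq bool :=
  if u is b :: u' then (if b then false :: inc u' else true :: u') else [::].
Fixpoint bval (u : seq bool) : nat := if u is b :: u' then b + 2 * bval u' else 0.

Lemma size_inc u : size (inc u) = size u.
Proof. by elim: u => //= b u IH; case: b => //=; rewrite IH. Qed.

Lemma nth_inc u i : i < size u -> nth false (inc u) i = nth false u i (+) all id (take i u).
Proof.
elim: u i => //= b u IH [|i] /=; first by case: b.
rewrite ltnS => hi; case: b => /=; first by rewrite IH.
by rewrite addbF.
Qed.

Lemma bval_inc u : ~~ all id u -> bval (inc u) = (bval u).+1.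
Proof. elim: u => //= b u IH; case: b => /= h; first by rewrite IH //; lia. lia. Qed.

Lemma bval_lt u : bval u < 2 ^ size u.
Proof. elim: u => //= b u IH; rewrite expnS; case: b => /=; lia. Qed.

Lemma bval_all u : all id u -> (bval u).+1 = 2 ^ size u.
Proof. elim: u => //= b u IH /andP [-> /IH h]; rewrite expnS -h /=; lia. Qed.

Lemma all_take_S (u : seq bool) i : i < size u -> all id (take i.+1 u) = all id (take i u) && nth false u i.
Proof. by move=> h; rewrite (take_nth false h) all_rcons andbC. Qed.

Notation Bst m := (('I_m.+1 + ('I_m.+1 * bool)) + (('I_m.+1 * bool) + bool))%type.
Definition Scan m (i : 'I_m.+1) : Bst m := inl (inl i).
Definition Chk m (i : 'I_m.+1) f : Bst m := inl (inr (i, f)).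
Definition Cnt m (i : 'I_m.+1) e : Bst m := inr (inl (i, e)).
Definition Ones m : Bst m := inr (inr false).
Definition Acc m : Bst m := inr (inr true).

Definition chkstep m (i : 'I_m.+1) (f d : bool) : {set Bst m} :=
  [set Cnt ord_max (d (+) f)] :|:
  (if i.+1 < m.+1 then [set Chk (inord i.+1) (f && d)] else set0) :|:
  (if (i == m :> nat) && f && d then [set Ones m] else set0).

Definition stepB m (q : Bst m) (d : bool) : {set Bst m} :=
  match q with
  | inl (inl i) => Scan (inord (i.+1 %% m.+1)) |: (if i == 0 :> nat then chkstep i true d else set0)
  | inl (inr (i, f)) => chkstep i f d
  | inr (inl (i, e)) => if i == 0 :> nat then (if d != e then [set Acc m] else set0)
                        else [set Cnt (inord i.-1) e]
  | inr (inr _) => [set Acc m]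
  end.

Definition BA m : nfa bool := @NFA bool (Bst m) (Scan ord0) (@stepB m) [set Acc m].

Lemma scan_run m (i : 'I_m.+1) w :
  Scan (inord ((i + size w) %% m.+1)) \in @delta_star _ (BA m) (Scan i) w.
Proof.
elim: w i => [|d w IH] i /=.
  rewrite delta_star_nil inE addn0 modn_small //; apply/eqP; congr inl; congr inl.
  by apply: val_inj; rewrite /= inordK.
rewrite delta_star_cons.
have := IH (inord (i.+1 %% m.+1)).
have -> : (inord (((inord (i.+1 %% m.+1) : 'I_m.+1) + size w) %% m.+1) : 'I_m.+1)
   = inord ((i + size (d :: w)) %% m.+1).
  by congr inord; rewrite inordK ?ltn_mod // modnDml /= addSnnS.
apply: (subsetP (delta_set_mono _ _)).
by rewrite sub1set /= !inE eqxx.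
Qed.

Lemma acc_run m w : Acc m \in @delta_star _ (BA m) (Acc m) w.
Proof.
elim: w => [|d w IH]; first by rewrite delta_star_nil inE.
by rewrite delta_star_cons /= -/(delta_star _ _).
Qed.

Lemma chk_run m k f w : k + size w < m.+1 ->
  Chk (inord (k + size w)) (f && all id w) \in @delta_star _ (BA m) (Chk (inord k) f) w.
Proof.
elim: w k f => [|d w IH] k f /=.
  by rewrite addn0 andbT delta_star_nil inE.
move=> h; rewrite delta_star_cons.
have := IH k.+1 (f && d); rewrite addSn -addnS andbA => /(_ h).
apply: (subsetP (delta_set_mono _ _)); rewrite sub1set /= /chkstep inordK; last by lia.
by rewrite ifT ?inE ?eqxx ?orbT //; lia.
Qed.

Lemma cnt_run m k e w : size w <= k -> k < m.+1 ->
  Cnt (inord (k - size w)) e \in @delta_star _ (BA m) (Cnt (inord k) e) w.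
Proof.
elim: w k => [|d w IH] k /=; first by rewrite subn0 delta_star_nil inE.
move=> h1 h2; rewrite delta_star_cons.
case: k h1 h2 => [//|k] h1 h2.
have := IH k h1 (ltnW h2); rewrite subSS.
apply: (subsetP (delta_set_mono _ _)); rewrite sub1set /= inordK //.
by rewrite inE.
Qed.

Definition Reach m (s : seq bool) (q : Bst m) a b (q' : Bst m) :=
  q' \in @delta_star _ (BA m) q (take (b - a) (drop a s)).

Lemma reach_trans m s q q' q'' a b c : a <= b -> b <= c ->
  Reach s q a b q' -> Reach s q' b c q'' -> @Reach m s q a c q''.
Proof.
rewrite /Reach => hab hbc h1 h2.
have E : c - a = (b - a) + (c - b) by lia.
rewrite E.
rewrite takeD drop_drop subnK //; exact: delta_star_trans h1 h2.
Qed.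

Lemma reach_step m s (q q' : Bst m) a : a < size s -> q' \in stepB q (nth false s a) ->
  Reach s q a a.+1 q'.
Proof.
move=> ha hq; rewrite /Reach subSnn (drop_nth false ha) /= take0.
exact: (@delta_star_step _ (BA m)).
Qed.

Lemma reach_word m s (q q' : Bst m) a l :
  q' \in @delta_star _ (BA m) q (take l (drop a s)) -> Reach s q a (a + l) q'.
Proof. by rewrite /Reach addKn. Qed.

Lemma reach_sim m s a b (q : Bst m) : a < b -> a < size s ->
  Reach s (Chk ord0 true) a b q -> Reach s (Scan ord0) a b q.
Proof.
rewrite /Reach => hab ha; have E : b - a = (b - a).-1.+1 by lia.
rewrite (drop_nth false ha) E.
rewrite /= !delta_star_cons => h; apply: (subsetP (@delta_set_mono _ (BA m) _ _ _ _)) h.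
by apply/subsetP => x hx /=; rewrite inE hx orbT.
Qed.

Lemma reach_acc m s a : Reach s (Acc m) a (size s) (Acc m).
Proof. exact: acc_run. Qed.

Lemma reach_scan m s a : a <= size s -> a %% m.+1 = 0 -> Reach s (Scan ord0) 0 a (Scan (@ord0 m)).
Proof.
move=> h1 h2; rewrite /Reach subn0 drop0.
have := @scan_run m ord0 (take a s); rewrite (size_takel h1) add0n h2.
by have -> : (inord 0 : 'I_m.+1) = ord0 by apply: val_inj; rewrite /= inordK.
Qed.

Lemma reach_full m s (q q' : Bst m) : Reach s q 0 (size s) q' -> q' \in @delta_star _ (BA m) q s.
Proof. by rewrite /Reach subn0 drop0 take_size. Qed.

Definition blk m (s : seq bool) j := take m.+1 (drop (j * m.+1) s).

Lemma v2_run m s j : (j.+1 * m.+1) < size s -> all id (blk m s j) ->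
  Acc m \in @delta_star _ (BA m) (Scan ord0) s.
Proof.
move=> hs hall; set a0 := j * m.+1.
have ha0 : a0 + m.+1 < size s by rewrite /a0 addnC -mulSn.
have R1 : @Reach m s (Scan ord0) 0 a0 (Scan ord0).
  apply: (@reach_scan m s a0); [lia | by rewrite modnMl].
have R2 : @Reach m s (Chk ord0 true) a0 (a0 + m) (Chk (inord m) true).
  apply: reach_word.
  have := @chk_run m 0 true (take m (drop a0 s)).
  rewrite size_takel; last by rewrite size_drop; lia.
  have -> : (inord 0 : 'I_m.+1) = ord0 by apply: val_inj; rewrite /= inordK.
  rewrite add0n /=.
  have -> : all id (take m (drop a0 s)) = true.
    by move: hall; rewrite /blk -/a0 -(cat_take_drop m (take m.+1 _)) all_cat take_takel // => /andP [].
  by apply.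
have R3 : Reach s (Chk (inord m) true) (a0 + m) (a0 + m).+1 (Ones m).
  apply: reach_step; first by lia.
  have -> : nth false s (a0 + m) = true.
    have := hall; rewrite /blk -/a0 => /all_nthP => /(_ false m); rewrite nth_take // nth_drop.
    by apply; rewrite size_takel // size_drop; lia.
  by rewrite /= /chkstep inordK // eqxx /= !inE eqxx orbT.
have R23 : @Reach m s (Scan ord0) a0 (a0 + m).+1 (Ones m).
  apply: reach_sim; [lia|lia|]; apply: reach_trans R2 R3; lia.
have R4 : Reach s (Ones m) (a0 + m).+1 (a0 + m).+2 (Acc m).
  by apply: reach_step => //; [lia | rewrite /= inE].
apply: reach_full.
apply: (reach_trans _ _ R1); first by lia. 2: apply: (reach_trans _ _ R23); first by lia.
3: apply: (reach_trans _ _ R4 (reach_acc _ _ _)); lia.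
all: lia.
Qed.

Lemma size_blk m s j : j.+1 * m.+1 <= size s -> size (blk m s j) = m.+1.
Proof. by move=> h; rewrite /blk size_takel // size_drop; rewrite mulSn in h; lia. Qed.

Lemma nth_blk m s j i : i < m.+1 -> nth false (blk m s j) i = nth false s (j * m.+1 + i).
Proof. by move=> h; rewrite /blk nth_take // nth_drop. Qed.

Lemma v1_run m s j i : i < m.+1 -> j.+2 * m.+1 <= size s ->
  nth false (blk m s j.+1) i != nth false (blk m s j) i (+) all id (take i (blk m s j)) ->
  Acc m \in @delta_star _ (BA m) (Scan ord0) s.
Proof.
move=> hi hs hne; set a0 := j * m.+1.
have hsz : a0 + i + m.+1 < size s by move: hs; rewrite /a0 !mulSn; lia.
set f := all id (take i (drop a0 s)).
set d := nth false s (a0 + i).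
have R1 : @Reach m s (Scan ord0) 0 a0 (Scan ord0).
  apply: (@reach_scan m s a0); [lia | by rewrite modnMl].
have R2 : @Reach m s (Chk ord0 true) a0 (a0 + i) (Chk (inord i) f).
  apply: reach_word.
  have := @chk_run m 0 true (take i (drop a0 s)).
  have hm : i <= size s - a0 by lia.
  rewrite size_takel; last by rewrite size_drop; exact: hm.
  have -> : (inord 0 : 'I_m.+1) = ord0 by apply: val_inj; rewrite /= inordK.
  by rewrite add0n /=; apply.
have R3 : @Reach m s (Chk (inord i) f) (a0 + i) (a0 + i).+1 (Cnt ord_max (d (+) f)).
  apply: reach_step; first by lia.
  by rewrite /= /chkstep !inE eqxx.
have R23 : @Reach m s (Scan ord0) a0 (a0 + i).+1 (Cnt ord_max (d (+) f)).
  apply: reach_sim; [lia|lia|]; apply: reach_trans R2 R3; lia.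
have R4 : @Reach m s (Cnt ord_max (d (+) f)) (a0 + i).+1 ((a0 + i).+1 + m) (Cnt (inord 0) (d (+) f)).
  apply: reach_word.
  have := @cnt_run m m (d (+) f) (take m (drop (a0 + i).+1 s)).
  have hm : m <= size s - (a0 + i).+1 by lia.
  rewrite size_takel; last by rewrite size_drop; exact: hm.
  have -> : (inord m : 'I_m.+1) = ord_max by apply: val_inj; rewrite /= inordK.
  by rewrite subnn; apply.
have R5 : @Reach m s (Cnt (inord 0) (d (+) f)) ((a0 + i).+1 + m) ((a0 + i).+1 + m).+1 (Acc m).
  apply: reach_step; first by lia.
  rewrite /= inordK // eqxx ifT ?inE //.
  move: hne; rewrite !nth_blk // take_takel; last by lia.
  rewrite /blk -/a0 mulSn.
  have -> : (a0 + i).+1 + m = m.+1 + a0 + i by lia.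
  rewrite (_ : nth false s (a0 + i) = d) // -/f.
have e1 : 0 <= a0 by [].
have e2 : a0 <= (a0 + i).+1 by rewrite -addnS leq_addr.
have e3 : (a0 + i).+1 <= (a0 + i).+1 + m by rewrite leq_addr.
have e4 : (a0 + i).+1 + m <= ((a0 + i).+1 + m).+1 by [].
have e5 : ((a0 + i).+1 + m).+1 <= size s by move: hsz; rewrite -addnS addSnnS addnS.
apply: reach_full.
exact: (reach_trans e1 (leq_trans e2 (leq_trans e3 (leq_trans e4 e5))) R1
  (reach_trans e2 (leq_trans e3 (leq_trans e4 e5)) R23
  (reach_trans e3 (leq_trans e4 e5) R4 (reach_trans e4 e5 R5 (reach_acc _ _ _))))).
Qed.

Lemma long_acc m s : (2 ^ m.+1).+1 * m.+1 <= size s ->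
  Acc m \in @delta_star _ (BA m) (Scan ord0) s.
Proof.
move=> hs; case: (boolP (Acc m \in _)) => // hn; exfalso.
have claim : forall j, j <= 2 ^ m.+1 -> j <= bval (blk m s j).
  elim=> // j IH hj.
  have hj' : j.+1 * m.+1 <= 2 ^ m.+1 * m.+1 by rewrite leq_mul2r hj orbT.
  have hs2 : j.+2 * m.+1 <= size s.
    apply: leq_trans hs; rewrite [j.+2 * _]mulSn [(2 ^ m.+1).+1 * _]mulSn leq_add2l //.
  have hV2 : ~~ all id (blk m s j).
    apply/negP => ha; move/negP: hn; apply; apply: (v2_run (j:=j)) ha.
    by apply: leq_trans hs2; rewrite ltn_mul2r /= ltnSn.
  have hV1 : blk m s j.+1 = inc (blk m s j).
    apply: (@eq_from_nth _ false).
      by rewrite size_inc !size_blk //; apply: leq_trans hs2; rewrite leq_mul2r leqnSn orbT.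
    move=> i; rewrite size_blk // => hi.
    rewrite nth_inc; last by rewrite size_blk //; apply: leq_trans hs2; rewrite leq_mul2r leqnSn orbT.
    apply/eqP; apply/negPn/negP => hne; move/negP: hn; apply; exact: (v1_run hi hs2 hne).
  by rewrite hV1 bval_inc // ltnS; apply: IH; apply: ltnW.
have := claim _ (leqnn _).
have := bval_lt (blk m s (2 ^ m.+1)).
have : 2 ^ size (blk m s (2 ^ m.+1)) <= 2 ^ m.+1.
  by apply: leq_pexp2l => //; rewrite /blk size_take_min geq_minl.
move=> h1 h2 h3; have := leq_ltn_trans h3 h2; rewrite ltnNge h1 //.
Qed.

Definition cb m j := iter j inc (nseq m.+1 false).
Definition Cw m := mkseq (fun p => nth false (cb m (p %/ m.+1)) (p %% m.+1)) (2 ^ m * m.+1).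

Lemma size_cb m j : size (cb m j) = m.+1.
Proof. by elim: j => [|j IH] /=; rewrite ?size_nseq // size_inc. Qed.

Lemma bval_cb m j : j < 2 ^ m.+1 -> bval (cb m j) = j.
Proof.
elim: j => [|j IH] h /=; first by elim: m {h} => //= m ->.
have hj := ltnW h; rewrite bval_inc ?IH //.
apply/negP => ha; have := bval_all ha; rewrite IH // size_cb => e.
by move: h; rewrite -e ltnn.
Qed.

Lemma cb_notall m j : j < 2 ^ m -> ~~ all id (cb m j).
Proof.
move=> h; have h2 : j < 2 ^ m.+1 by rewrite expnS; lia.
apply/negP => ha; have := bval_all ha; rewrite bval_cb // size_cb => e.
by rewrite expnS in e; lia.
Qed.

Lemma size_Cw m : size (Cw m) = 2 ^ m * m.+1.
Proof. by rewrite size_mkseq. Qed.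

Lemma nth_Cw m t : t < 2 ^ m * m.+1 ->
  nth false (Cw m) t = nth false (cb m (t %/ m.+1)) (t %% m.+1).
Proof. by move=> h; rewrite nth_mkseq. Qed.

Definition goodB m t (q : Bst m) : Prop :=
  match q with
  | inl (inl i) => i = t %% m.+1 :> nat
  | inl (inr (i, f)) => i = t %% m.+1 :> nat /\ f = all id (take i (cb m (t %/ m.+1)))
  | inr (inl (i, e)) => t + i < 2 ^ m * m.+1 -> e = nth false (Cw m) (t + i)
  | inr (inr _) => False
  end.

Lemma chk_good m t (i : 'I_m.+1) f q : t < 2 ^ m * m.+1 ->
  i = t %% m.+1 :> nat -> f = all id (take i (cb m (t %/ m.+1))) ->
  q \in chkstep i f (nth false (Cw m) t) -> goodB t.+1 q.
Proof.
move=> ht hi hf; rewrite nth_Cw // -hi.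
set c := cb m (t %/ m.+1).
have et : t = t %/ m.+1 * m.+1 + i by rewrite hi -divn_eq.
have hK : t %/ m.+1 < 2 ^ m by rewrite ltn_divLR.
have hic : i < size c by rewrite size_cb.
rewrite /chkstep !inE => /orP [/orP [/eqP ->|]|].
- rewrite /= => h; rewrite addSnnS in h *.
  have e1 : (t + m.+1) %/ m.+1 = (t %/ m.+1).+1 by rewrite divnDr // divnn addn1.
  have e2 : (t + m.+1) %% m.+1 = i by rewrite modnDr hi.
  by rewrite nth_Cw // e1 e2 /= nth_inc // hf.
- case: ifP => hlt; last by rewrite inE.
  rewrite inE => /eqP -> /=.
  have e1 : t.+1 = t %/ m.+1 * m.+1 + i.+1 by rewrite {1}et addnS.
  rewrite inordK // e1 modnMDl (modn_small hlt) divnMDl // (divn_small hlt) addn0.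
  by split => //; rewrite -/c all_take_S // hf.
- case: ifP => [/andP [/andP [/eqP him hf2] hd]|]; last by rewrite inE.
  rewrite inE => /eqP -> /=.
  have := cb_notall hK; rewrite -/c.
  have : all id (take i.+1 c) by rewrite all_take_S // -hf hf2 hd.
  by rewrite him take_oversize ?size_cb // => ->.
Qed.

Lemma step_good m t (q q' : Bst m) : t < 2 ^ m * m.+1 -> goodB t q ->
  q' \in stepB q (nth false (Cw m) t) -> goodB t.+1 q'.
Proof.
move=> ht; case: q => [[i|[i f]]|[[i e]|b]] /=.
- move=> hi; rewrite !inE => /orP [/eqP -> /=|].
    by rewrite inordK ?ltn_mod // hi -[(t %% m.+1).+1]addn1 modnDml addn1.
  case: ifP => [/eqP i0|]; last by rewrite inE.
  by apply: (@chk_good m t i true q') => //; rewrite i0 take0.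
- by move=> [hi hf]; apply: (@chk_good m t i f q').
- case: i => [[|i] hi] /= he.
    by have := he; rewrite addn0 => /(_ ht) ->; rewrite eqxx inE.
  rewrite inE => /eqP -> /=; rewrite inordK; last by lia.
  move=> h.
  have -> : t.+1 + i = t + i.+1 by lia.
  by apply: he; rewrite -addSnnS.
- by [].
Qed.

Lemma Cw_noacc m : Acc m \notin @delta_star _ (BA m) (Scan ord0) (Cw m).
Proof.
have H : forall t, t <= 2 ^ m * m.+1 -> forall q, q \in @delta_star _ (BA m) (Scan ord0) (take t (Cw m)) -> goodB t q.
  elim=> [|t IH] ht q.
    by rewrite take0 delta_star_nil inE => /eqP ->.
  rewrite (take_nth false); last by rewrite size_Cw.
  move=> /delta_star_rcons_inv [r hr hq].
  apply: step_good hq => //; apply: IH hr; exact: ltnW.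
apply/negP => hA; have := H _ (leqnn _) _ ; rewrite -size_Cw take_size => /(_ _ hA).
by [].
Qed.

Definition tstate := (nat * nat * seq bool * bool)%type.
Definition tstep (st : tstate) (c : bool) : tstate :=
  let: (ac, bc, s, bad) := st in
  if c then (if 0 < ac then (0, 1, rcons s (3 <= ac), bad) else (0, bc.+1, s, bad || (2 <= bc)))
  else (ac.+1, 0, s, bad || (4 <= ac)).
Definition trk y := foldl tstep (0, 0, [::], false) y.

Lemma trk_rcons y c : trk (rcons y c) = tstep (trk y) c.
Proof. by rewrite /trk foldl_rcons. Qed.

Notation Mst m := (option (((bool * Bst m) * 'I_5) * 'I_3)).

Definition stepM m (st : Mst m) (c : bool) : {set Mst m} :=
  match st with
  | None => [set None]
  | Some (p, q, ac, bc) =>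
    if c then
      (if ac != 0 :> nat then [set Some (~~ p, q', ord0, inord 1) | q' in stepB q (3 <= ac)]
       else if bc == 2 :> nat then [set None] else [set Some (~~ p, q, ord0, inord bc.+1)])
    else (if ac == 4 :> nat then [set None] else [set Some (~~ p, q, inord ac.+1, ord0)])
  end.

Definition finalM m : {set Mst m} :=
  [set st : Mst m | if st is Some (p, q, _, _) then ~~ p || (q == Acc m) else true].

Definition MA m : nfa bool :=
  @NFA bool (Mst m) (Some (false, Scan ord0, ord0, ord0)) (@stepM m) (finalM m).

Lemma ord3_lt (b : 'I_3) : (b : nat) <> 2 -> b.+1 < 3.
Proof. by case: b => [[|[|[|k]]] hk] //=. Qed.
Lemma ord5_lt (a : 'I_5) : (a : nat) <> 4 -> a.+1 < 5.
Proof. by case: a => [[|[|[|[|[|k]]]]] hk] //=. Qed.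

Lemma M_sound m y (st : Mst m) : st \in @delta_star _ (MA m) (init (MA m)) y ->
  let: (ac, bc, s, bad) := trk y in
  match st with
  | None => bad
  | Some (p, q, a, b) => [/\ ~~ bad, p = odd (size y), (a : nat) = ac, (b : nat) = bc &
                            q \in @delta_star _ (BA m) (Scan ord0) s]
  end.
Proof.
elim/last_ind: y st => [|y c IH] st.
  by rewrite delta_star_nil inE => /eqP -> /=; split => //; rewrite delta_star_nil inE.
move=> /delta_star_rcons_inv [r hr hst]; have := IH _ hr.
rewrite trk_rcons size_rcons; case: (trk y) => [[[ac bc] s] bad].
case: r hr hst => [[[[p q] a] b]|] hr /=; last first.
  rewrite inE => /eqP -> hb; case: c => /=; last by rewrite hb.
  by case: (0 < ac); rewrite /= hb.
move=> hst [nb hp ha hb hq]; subst ac bc p; case: c hst => /=.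
- case: ifP => [a0|/negbT].
    move=> /imsetP [q' hq' ->] /=.
    rewrite lt0n a0 /= inordK //; split => //.
    exact: (@delta_star_rcons _ (BA m) _ _ _ _ _ hq hq').
  rewrite negbK => /eqP a0; rewrite a0 /=.
  case: ifP => [/eqP b2|/negbT/eqP b2]; first by rewrite inE => /eqP -> /=; rewrite b2 orbT.
  rewrite inE => /eqP -> /=; rewrite inordK; last exact: ord3_lt b2.
  have := ord3_lt b2; rewrite ltnS => hb.
  split => //; by rewrite (negbTE nb) /= -ltnNge.
- case: ifP => [/eqP a4|/negbT/eqP a4]; first by rewrite inE => /eqP -> /=; rewrite a4 orbT.
  rewrite inE => /eqP -> /=; rewrite inordK; last exact: ord5_lt a4.
  have := ord5_lt a4; rewrite ltnS => ha.
  split => //; by rewrite (negbTE nb) /= -ltnNge.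
Qed.

Lemma inord0 k : (inord 0 : 'I_k.+1) = ord0.
Proof. by apply: val_inj; rewrite /= inordK. Qed.

Lemma M_complete m y :
  let: (ac, bc, s, bad) := trk y in
  (bad -> None \in @delta_star _ (MA m) (init (MA m)) y) /\
  (~~ bad -> [/\ ac <= 4, bc <= 2 & forall q, q \in @delta_star _ (BA m) (Scan ord0) s ->
      Some (odd (size y), q, inord ac, inord bc) \in @delta_star _ (MA m) (init (MA m)) y]).
Proof.
elim/last_ind: y => [|y c IH].
  split => // _; split => // q; rewrite !delta_star_nil !inE => /eqP ->.
  by rewrite !inord0.
move: IH; rewrite trk_rcons size_rcons; case: (trk y) => [[[ac bc] s] bad] [Hb Hg].
have q0 := @scan_run m ord0 s; set q0s := Scan _ in q0.
have noneS : None \in @delta_star _ (MA m) (init (MA m)) y ->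
    None \in @delta_star _ (MA m) (init (MA m)) (rcons y c).
  by move=> h; apply: (delta_star_rcons h); rewrite /= inE.
case: c noneS => /= noneS.
- case: (ltnP 0 ac) => hac /=.
    split; first by move=> hb; apply: noneS; apply: Hb.
    move=> nb; have [h4 h2 hq] := Hg nb; split => // q.
    move=> /(@delta_star_rcons_inv _ (BA m)) [r hr hq'].
    apply: (delta_star_rcons (hq _ hr)); rewrite /= inordK; last by lia.
    rewrite ifT; last by lia.
    by rewrite inord0; apply/imsetP; exists q.
  have ac0 : ac = 0 by lia.
  case: (boolP bad) => [hb|nb] /=; first by split => // _; apply: noneS; apply: Hb.
  have [h4 h2 hq] := Hg nb.
  split.
    move=> hb2; have := hq _ q0 => hs; apply: (delta_star_rcons hs).
    by rewrite /= !inordK ?ac0 //=; try lia; rewrite ifT ?inE //; lia.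
  move=> hb2; split => //; first by lia.
  move=> q hq2; apply: (delta_star_rcons (hq _ hq2)).
  rewrite /= !inordK ?ac0 //=; try lia. rewrite ifF; last by lia.
  by rewrite inord0 inE.
- case: (boolP bad) => [hb|nb] /=; first by split => // _; apply: noneS; apply: Hb.
  have [h4 h2 hq] := Hg nb.
  split.
    move=> ha4; have := hq _ q0 => hs; apply: (delta_star_rcons hs).
    by rewrite /= !inordK //=; try lia; rewrite ifT ?inE //; lia.
  move=> ha4; split => //; first by lia.
  move=> q hq2; apply: (delta_star_rcons (hq _ hq2)).
  rewrite /= inordK; last by lia.
  rewrite ifF; last by lia.
  by rewrite inord0 inE.
Qed.

Lemma accM_sound m y : accepts (MA m) y ->
  let: (ac, bc, s, bad) := trk y in
  [\/ bad, ~~ odd (size y) | Acc m \in @delta_star _ (BA m) (Scan ord0) s].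
Proof.
move=> /existsP [st /andP [hst hf]]; have := M_sound hst.
case: (trk y) => [[[ac bc] s] bad].
case: st hst hf => [[[[p q] a] b]|] _ /=; last by move=> _ ->; constructor 1.
rewrite inE => hf [nb hp _ _ hq2]; subst p.
case/orP: hf => [hp|/eqP hq]; first by constructor 2.
by constructor 3; rewrite -hq.
Qed.

Lemma accM_complete m y :
  let: (ac, bc, s, bad) := trk y in
  [\/ bad, ~~ odd (size y) | Acc m \in @delta_star _ (BA m) (Scan ord0) s] -> accepts (MA m) y.
Proof.
have := @M_complete m y; case: (trk y) => [[[ac bc] s] bad] [Hb Hg] H.
case: (boolP bad) => [hb|nb].
  by apply/existsP; exists None; rewrite Hb //= inE.
have [h4 h2 hq] := Hg nb.
case: H => [hb|he|ha]; first by rewrite hb in nb.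
  apply/existsP; exists (Some (odd (size y), Scan (inord (((@ord0 m) + size s) %% m.+1)), inord ac, inord bc)).
  by rewrite hq ?scan_run //= inE he.
apply/existsP; exists (Some (odd (size y), Acc m, inord ac, inord bc)).
by rewrite hq //= inE eqxx orbT.
Qed.

Lemma trk_size_inv y :
  let: (ac, bc, s, bad) := trk y in
  ~~ bad -> [/\ ac <= 4, bc <= 2, (0 < ac -> bc = 0) &
             size y <= 6 * size s + bc + (if 0 < ac then 2 + ac else 0)].
Proof.
elim/last_ind: y => [|y c IH] //=.
move: IH; rewrite trk_rcons size_rcons; case: (trk y) => [[[ac bc] s] bad] IH.
case: c; case: ac IH => [|ac] IH; case: bad IH => IH //= H; have [h1 h2 h3 h4] := IH isT;
  move: h3 h4 => /= h3 h4; rewrite ?size_rcons; split => //; lia.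
Qed.

Lemma trk_size y : let: (ac, bc, s, bad) := trk y in ~~ bad -> size y <= 6 * size s + 6.
Proof.
have := trk_size_inv y; case: (trk y) => [[[ac bc] s] bad] H nb.
have [h1 h2 h3 h4] := H nb; clear H; case: ac h1 h3 h4 => [|ac] /= h1 h3 h4; lia.
Qed.

Definition Bd m := 6 * ((2 ^ m.+1).+1 * m.+1) + 6.

Lemma rejected_short m y : ~~ accepts (MA m) y -> size y <= Bd m.
Proof.
move=> hn; have := @accM_complete m y; have := trk_size y.
case: (trk y) => [[[ac bc] s] bad] hs hc.
case: (boolP bad) => [hb|nb]; first by move/negP: hn; case; apply: hc; constructor 1.
have hs2 := hs nb.
case: (leqP ((2 ^ m.+1).+1 * m.+1) (size s)) => hl.
  by move/negP: hn; case; apply: hc; constructor 3; apply: long_acc.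
rewrite /Bd; set X := (2 ^ m.+1).+1 * m.+1 in hl *; apply: (leq_trans hs2); rewrite leq_add2r leq_mul2l /=; exact: ltnW.
Qed.

Definition seg (b : bool) := rcons (nseq (if b then 3 else 1) false) true.
Definition enc (C : seq bool) := flatten (map seg C).

Lemma enc_trk C bc0 s :
  foldl tstep (0, bc0, s, false) (enc C) = (0, if C is [::] then bc0 else 1, s ++ C, false).
Proof.
elim: C bc0 s => [|b C IH] bc0 s /=; first by rewrite cats0.
rewrite foldl_cat (_ : foldl tstep (0, bc0, s, false) (seg b) = (0, 1, rcons s b, false)).
  by rewrite IH cat_rcons; case: C {IH}.
by case: b.
Qed.

Lemma dup_cat (u v : seq bool) i :
  dup (u ++ v) i = if i < size u then dup u i ++ v else u ++ dup v (i - size u).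
Proof.
rewrite /dup take_cat nth_cat drop_cat; case: ifP => h //.
by rewrite -catA.
by rewrite catA.
Qed.

Lemma enc_dup C bc0 s i : i < size (enc C) ->
  exists bc', foldl tstep (0, bc0, s, false) (dup (enc C) i) = (0, bc', s ++ C, false).
Proof.
elim: C bc0 s i => [|b C IH] bc0 s i //=.
rewrite dup_cat size_cat; case: ifP => hi hlt.
  rewrite foldl_cat.
  have [bc1 ->] : exists bc1, foldl tstep (0, bc0, s, false) (dup (seg b) i) = (0, bc1, rcons s b, false).
    clear -hi; case: b hi => /=; case: i => [|[|[|[|i]]]] //= _; by eexists.
  by rewrite enc_trk cat_rcons; eexists.
rewrite foldl_cat (_ : foldl tstep (0, bc0, s, false) (seg b) = (0, 1, rcons s b, false)); last by case: b {hi hlt}.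
have hi' : size (seg b) <= i by rewrite leqNgt hi.
have hlt' : i - size (seg b) < size (enc C) by rewrite ltn_subLR.
have [bc' ->] := IH 1 (rcons s b) (i - size (seg b)) hlt'.
by rewrite cat_rcons; eexists.
Qed.

Lemma enc_even C : ~~ odd (size (enc C)).
Proof. by elim: C => //= b C IH; rewrite size_cat oddD; case: b. Qed.

Lemma enc_size C : size C <= size (enc C).
Proof. by elim: C => //= b C IH; rewrite size_cat -add1n; apply: leq_add => //; case: b. Qed.

Lemma size_dup (w : seq bool) i : i < size w -> size (dup w i) = (size w).+1.
Proof. by move=> h; rewrite /dup size_cat /= size_take h size_drop; lia. Qed.

Fixpoint allw k : seq (seq bool) :=
  if k is k'.+1 then [::] :: [seq b :: w | b <- [:: true; false], w <- allw k'] else [:: [::]].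

Lemma allwP k w : size w <= k -> w \in allw k.
Proof.
elim: k w => [|k IH] [|b w] //=; rewrite ltnS => h; rewrite inE; apply/orP; right.
by case: b; rewrite !mem_cat (map_f _ (IH _ h)) ?orbT.
Qed.

Theorem theorem9 :
  exists c : nat, forall n : nat, 1 <= n ->
    exists L : seq bool -> Prop,
      in_DD0 L /\
      (exists M : nfa bool, recognizes M L /\ nfa_size M <= c * n ^ 2) /\
      (forall M : nfa bool, is_poNFA M -> recognizes M L ->
         2 ^ n.-1 < nfa_size M).
Proof.
exists 211; case=> [//|m] _.
exists (fun w => accepts (MA m) w); split.
  right; exists [seq w <- allw (Bd m) | ~~ accepts (MA m) w] => w.
  rewrite mem_filter; split.
    move=> hn; have hn' : ~~ accepts (MA m) w by apply/negP.
    rewrite hn' /=; exact: (allwP (rejected_short hn')).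
  by move=> /andP [/negP h _].
split.
  exists (MA m); split => //.
  rewrite /nfa_size /= card_option !card_prod !card_sum !card_prod !card_ord card_bool.
  have h : m.+1 <= m.+1 ^ 2 by rewrite expnS expn1 leq_pmulr.
  set X := m.+1 ^ 2 in h *; clearbody X; lia.
move=> M po rec; rewrite ltnNge; apply/negP => hk /=.
set x := enc (Cw m).
have hx : accepts (MA m) x.
  have := @accM_complete m x; rewrite /trk /x enc_trk /=; apply; constructor 2.
  exact: enc_even.
have hsz : #|state M| <= size x.
  apply: (leq_trans hk); apply: leq_trans (enc_size _); rewrite size_Cw leq_pmulr //.
have [i hi hacc] := po_accept po (proj1 (rec x) hx) hsz.
have := accM_sound (proj2 (rec _) hacc); rewrite /trk /x.
have [bc' ->] := @enc_dup (Cw m) 0 [::] i hi.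
rewrite size_dup // /= (negbTE (enc_even _)) /= => -[] //.
by move=> h; have := Cw_noacc m; rewrite h.
Qed.
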